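(* Let $\ell\ge 4$, $s\ge 0$, $r\ge 2$ be integers. There is a constant $c=c(\ell,s,r)$ such that for every $n$ and every $n$-vertex $B(\ell,s)$-free graph $G$, the number of $r$-element subsets of $V(G)$ having more than $\ell+s$ common neighbors in $G$ is at most $cn$.
   Context: The broom $B(\ell,s)$ is the graph obtained from a path on $\ell$ vertices by adding $s$ new vertices, each joined only to a penultimate vertex of the path (a neighbor of an endpoint). A common neighbor of a vertex set $X$ is a vertex adjacent to every vertex of $X$. *)

(* Defs.v *)
From mathcomp Require Import all_boot.
Set Implicit Arguments. Unset Strict Implicit. Unset Printing Implicit Defensive.

Definition simple_graph (T : finType) (e : rel T) : Prop :=
  symmetric e /\ irreflexive e.

(* Edge relation of the broom B(l,s) on vertex set 'I_(l+s):
   vertices 0..l-1 form the path 0-1-...-(l-1); vertices l..l+s-1 are the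
   s extra vertices, each joined only to vertex 1 (the neighbor of endpoint 0). *)
Definition broom_edge (l s : nat) (i j : 'I_(l + s)) : bool :=
  [|| (i < l) && (j < l) && ((i.+1 == j :> nat) || (j.+1 == i :> nat)),
      (l <= i) && (j == 1 :> nat)
    | (l <= j) && (i == 1 :> nat)].

Definition contains_broom (T : finType) (e : rel T) (l s : nat) : Prop :=
  exists f : 'I_(l + s) -> T, injective f /\
    forall i j, broom_edge i j -> e (f i) (f j).

Definition broom_free (T : finType) (e : rel T) (l s : nat) : Prop :=
  ~ contains_broom e l s.

Definition common_nbhd (T : finType) (e : rel T) (X : {set T}) : {set T} :=
  [set v | [forall x in X, e x v]].

(* Main.v *)
Require Import Defs.
From mathcomp Require Import all_boot zify.
Set Implicit Arguments. Unset Strict Implicit. Unset Printing Implicit Defensive.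

Section Broom.
Variables (T : finType) (e : rel T) (l s : nat).
Hypothesis Hsym : symmetric e.

Definition rich (v u : T) := (v != u) && (l + s < #|common_nbhd e [set v; u]|).
Definition Rn (v : T) (S : {set T}) := [set u in S | rich v u].

Lemma nbhd_anti (A B : {set T}) :
  A \subset B -> common_nbhd e B \subset common_nbhd e A.
Proof.
move=> AB; apply/subsetP=> v; rewrite !inE => /forall_inP H.
apply/forall_inP=> x xA; apply: H; exact: (subsetP AB).
Qed.

Lemma not_sub_card (A : {set T}) (q : seq T) :
  size q < #|A| -> exists2 y, y \in A & y \notin q.
Proof.
move=> H; case: (boolP (A \subset q)) => [sub|/subsetPn //].
by have := leq_trans (subset_leq_card sub) (card_size q); rewrite leqNgt H.
Qed.

Definition Inv (S : {set T}) x1 p := [&& path e x1 p, uniq (x1 :: p) & last x1 p \in S].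

Lemma grow (S : {set T}) : (forall v, v \in S -> l <= #|Rn v S|) -> forall x1, x1 \in S ->
  forall j, 2 * j < l -> exists p, Inv S x1 p && (size p == 2 * j).
Proof.
move=> HS x1 x1S; elim=> [|j IH] Hj.
  by exists [::]; rewrite /Inv /= x1S.
have [p /andP[/and3P[Hp Hu Hl] /eqP Hs]] := IH (ltac:(lia)).
set x := last x1 p in Hl.
have [y yR ynot] : exists2 y, y \in Rn x S & y \notin x1 :: p.
  apply: not_sub_card; rewrite /= Hs; have := HS x Hl; lia.
move: yR; rewrite inE => /andP[yS /andP[xy Hk]].
have [c cN cnot] : exists2 c, c \in common_nbhd e [set x; y] & c \notin y :: x1 :: p.
  apply: not_sub_card; rewrite /= Hs; lia.
move: cN; rewrite inE => /forall_inP cN.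
have exc := cN x (set21 x y); have eyc := cN y (set22 x y).
exists (rcons (rcons p c) y); apply/andP; split; last by rewrite !size_rcons Hs; apply/eqP; lia.
apply/and3P; split.
- by rewrite !rcons_path Hp last_rcons exc Hsym eyc.
- rewrite -!rcons_cons !rcons_uniq Hu mem_rcons inE.
  move: cnot; rewrite !inE negb_or => /andP[cy ->]; rewrite andbT.
  by move: ynot; rewrite !inE (eq_sym y c) (negbTE cy) /= andbT.
- by rewrite (last_rcons x1 (rcons p c) y).
Qed.

Lemma build (S : {set T}) : 4 <= l -> S != set0 ->
  (forall v, v \in S -> l <= #|Rn v S|) -> contains_broom e l s.
Proof.
move=> l4 /set0Pn[x1 x1S] HS.
have [p /andP[/and3P[Hp Hu _] /eqP Hs]] :=
  @grow S HS x1 x1S (l.-1 %/ 2) (ltac:(lia)).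
set P := x1 :: p.
have sP : l.-1 <= size P <= l by rewrite /P /= Hs; lia.
have [y yR _] : exists2 y, y \in Rn x1 S & y \notin [::].
  by apply: not_sub_card; have := HS x1 x1S; rewrite /=; lia.
move: yR; rewrite inE => /andP[_ /andP[_ Hk]].
set N2 := common_nbhd e [set x1; y] in Hk.
set B := N2 :\: [set z in P].
have cB : s < #|B|.
  rewrite /B cardsD.
  have : #|N2 :&: [set z in P]| <= size P.
    apply: (leq_trans _ (card_size P)); apply: subset_leq_card.
    by apply/subsetP=> z; rewrite !inE => /andP[_].
  lia.
set L := enum B.
have sL : s < size L by rewrite /L -cardE.
have LB : forall m, m < size L -> nth x1 L m \in B.
  by move=> m Hm; rewrite -mem_enum mem_nth.
have LN : forall m, m < size L -> e x1 (nth x1 L m).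
  move=> m /LB; rewrite !inE => /andP[_ /forall_inP H]; exact: H (set21 _ _).
have fL : forall m, m < size L -> nth x1 L m \notin P.
  move=> m /LB; rewrite !inE => /andP[H _]; exact: H.
have mix : forall a b, a < size L -> b < size P -> nth x1 L a = nth x1 P b -> False.
  move=> a b Ha Hb E; have := fL a Ha; by rewrite E mem_nth.
have injL : forall a b, nth x1 L a = nth x1 L b -> a < size L -> b < size L -> a = b.
  move=> a b E Ha Hb; apply/eqP; rewrite -(nth_uniq x1 Ha Hb (enum_uniq _)); exact/eqP.
have injP : forall a b, nth x1 P a = nth x1 P b -> a < size P -> b < size P -> a = b.
  move=> a b E Ha Hb; apply/eqP; rewrite -(nth_uniq x1 Ha Hb Hu); exact/eqP.
have adjP : forall a, a.+1 < size P -> e (nth x1 P a) (nth x1 P a.+1).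
  move=> a Ha; move/(pathP x1): Hp => H; exact: H.
pose f (i : 'I_(l + s)) : T := if (i == 0 :> nat) then nth x1 L 0
  else if i < l then nth x1 P i.-1 else nth x1 L (i - l).+1.
exists f; split.
- move=> i j Heq; apply: val_inj; move: Heq; rewrite /f.
  have := ltn_ord i; have := ltn_ord j.
  case: (eqVneq (i:nat) 0) => Hi; case: (eqVneq (j:nat) 0) => Hj;
  case: (ltnP i l) => Hil; case: (ltnP j l) => Hjl => //= Hjs His Heq.
  all: try first [ lia
   | (move/injL: Heq => H; have := H ltac:(lia) ltac:(lia); lia)
   | (move/injP: Heq => H; have := H ltac:(lia) ltac:(lia); lia)
   | (exfalso; apply: (mix _ _ _ _ Heq); lia)
   | (exfalso; apply: (mix _ _ _ _ (Logic.eq_sym Heq)); lia) ].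
- move=> i j; rewrite /broom_edge /f.
  have := ltn_ord i; have := ltn_ord j.
  case: (eqVneq (i:nat) 0) => Hi; case: (eqVneq (j:nat) 0) => Hj;
  case: (ltnP i l) => Hil; case: (ltnP j l) => Hjl => //= Hjs His.
  all: rewrite ?orbF => H; repeat (case/orP: H => H); move/eqP: H => E.
  all: try first [ lia
   | ((have -> : (j:nat).-1 = 0 by lia); rewrite /P /= Hsym; apply: LN; lia)
   | ((have -> : (i:nat).-1 = 0 by lia); rewrite /P /=; apply: LN; lia)
   | ((have -> : (j:nat).-1 = (i:nat).-1.+1 by lia); apply: adjP; lia)
   | ((have -> : (i:nat).-1 = (j:nat).-1.+1 by lia); rewrite Hsym; apply: adjP; lia) ].
Qed.

Definition Fam (r : nat) (S : {set T}) :=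
  [set X : {set T} | (X \subset S) && ((#|X| == r) && (l + s < #|common_nbhd e X|))].

Lemma count_bound (r : nat) : 0 < r -> broom_free e l s -> 4 <= l ->
  forall S : {set T}, #|Fam r S| <= 2 ^ l * #|S|.
Proof.
move=> r0 bf l4 S.
have [n Hn] : exists n, #|S| <= n by exists #|S|.
elim: n S Hn => [|n IH] S Hn.
  have -> : Fam r S = set0.
    apply/setP=> X; rewrite !inE; apply/negP => /andP[XS /andP[/eqP Xr _]].
    move: Hn; rewrite leqn0 cards_eq0 => /eqP S0.
    move: XS; rewrite S0 subset0 => /eqP X0; move: Xr; rewrite X0 cards0; lia.
  by rewrite cards0.
case: (eqVneq S set0) => [S0|Sn0].
  have -> : Fam r S = set0.
    apply/setP=> X; rewrite !inE; apply/negP => /andP[XS /andP[/eqP Xr _]].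
    move: XS; rewrite S0 subset0 => /eqP X0; move: Xr; rewrite X0 cards0; lia.
  by rewrite cards0.
have [v vS vsmall] : exists2 v, v \in S & #|Rn v S| < l.
  case: (boolP [exists v in S, #|Rn v S| < l]) => [/exists_inP[v ? ?]|/exists_inP H].
    by exists v.
  exfalso; apply: bf; apply: (@build S l4 Sn0) => u uS; rewrite leqNgt; apply/negP=> H'.
  by apply: H; exists u.
have sub : Fam r S \subset Fam r (S :\ v) :|: powerset (v |: Rn v S).
  apply/subsetP=> X; rewrite !inE => /andP[XS /andP[Xr Xk]].
  case: (boolP (v \in X)) => vX.
    apply/orP; right; apply/subsetP=> u uX; rewrite !inE.
    case: (eqVneq u v) => //= uv; rewrite (subsetP XS u uX) /rich eq_sym uv /=.
    apply: (leq_trans Xk); apply: subset_leq_card; apply: nbhd_anti.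
    by apply/subsetP=> z; rewrite !inE => /orP[]/eqP->.
  apply/orP; left; rewrite Xr Xk !andbT; apply/subsetP=> u uX; rewrite !inE (subsetP XS u uX) andbT.
  by apply: contraNneq vX => <-.
have cS : #|S| = (#|S :\ v|).+1 by rewrite (cardsD1 v S) vS.
have IH' := IH (S :\ v) ltac:(lia).
have cP : #|powerset (v |: Rn v S)| <= 2 ^ l.
  rewrite card_powerset; apply: leq_pexp2l => //; rewrite cardsU1; case: (v \notin _) => /=; lia.
apply: (leq_trans (subset_leq_card sub)); apply: (leq_trans (leq_card_setU _ _)).
rewrite cS mulnS addnC; exact: leq_add.
Qed.

End Broom.

Theorem mainTheorem4 (l s r : nat) :
  4 <= l -> 2 <= r ->
  exists c : nat,
    forall (T : finType) (e : rel T),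
      simple_graph e -> broom_free e l s ->
      #|[set X : {set T} | (#|X| == r) && (l + s < #|common_nbhd e X|)]|
        <= c * #|T|.
Proof.
move=> l4 r2; exists (2 ^ l) => T e [Hsym _] bf.
have := @count_bound T e l s Hsym r (ltac:(lia)) bf l4 setT.
rewrite cardsT; apply: leq_trans; apply: subset_leq_card; apply/subsetP=> X.
by rewrite !inE subsetT.
Qed.
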